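(* Let $I\subseteq\mathbb{R}$ be an interval, $p\in\mathbb{N}$, $\mathbf{d}=(d_1,\dots,d_p)\in\mathbb{N}^p$, $\alpha\in\mathbb{N}_p^{\mathbf{d}}$, and let $\mathbf{M}=(M_1,\dots,M_p)$ be a $\mathbf{d}$-averaging mapping on $I$. Assume that the root graph $\mathcal{R}(G_\alpha)$ is ergodic and each $M_i$ is continuous and strict. Let $K_\alpha\colon I^p\to I$ be the mean such that $\mathbf{M}_\alpha^n\to\mathbf{K}_\alpha:=(K_\alpha,\dots,K_\alpha)$ pointwise on $I^p$ as $n\to\infty$ (which exists under these hypotheses). Then: (a) $\mathbf{K}_\alpha=\mathbf{K}_\alpha\circ\mathbf{M}_\alpha$; (b) if $M_1,\dots,M_p$ are nondecreasing in each variable, then so is $K_\alpha$; (c) if $I=(0,+\infty)$ and $M_1,\dots,M_p$ are positively homogeneous, then every iterate $\mathbf{M}_\alpha^n$ and $K_\alpha$ are positively homogeneous.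
   Context: A $k$-variable mean on an interval $I$ is a function $M\colon I^k\to I$ with $\min(x)\le M(x)\le\max(x)$ for all $x\in I^k$; it is strict if both inequalities are strict for every nonconstant $x$. Notation: $\mathbb{N}_p=\{1,\dots,p\}$, $\mathbb{N}_p^{\mathbf{d}}=\mathbb{N}_p^{d_1}\times\dots\times\mathbb{N}_p^{d_p}$. A $\mathbf{d}$-averaging mapping on $I$ is a sequence $(M_1,\dots,M_p)$ where each $M_i$ is a $d_i$-variable mean on $I$. For $\alpha=(\alpha_1,\dots,\alpha_p)\in\mathbb{N}_p^{\mathbf{d}}$, $\alpha_i=(\alpha_{i,1},\dots,\alpha_{i,d_i})$, define $\mathbf{M}_\alpha\colon I^p\to I^p$ by $\mathbf{M}_\alpha(x)=\big(M_i(x_{\alpha_{i,1}},\dots,x_{\alpha_{i,d_i}})\big)_{i=1}^p$; $\mathbf{M}_\alpha^n$ is its $n$-th iterate. The $\alpha$-incidence graph is $G_\alpha=(\mathbb{N}_p,E_\alpha)$, $E_\alpha=\{(\alpha_{i,j},i): i\in\mathbb{N}_p, j\in\mathbb{N}_{d_i}\}$. A digraph is ergodic if it is nonempty, irreducible (walks exist between any two vertices) and aperiodic (no integer $k>1$ divides the length of every cycle). The root $R(G)$ of a digraph $G$ is the union of the strongly connected components that receive no edge from another component; the root graph $\mathcal{R}(G)$ is the subgraph induced by $R(G)$. Positive homogeneity of $F$ on $(0,\infty)^k$ means $F(tx)=tF(x)$ for all $t>0$. *)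

(* Defs.v *)
From HB Require Import structures.
From mathcomp Require Import all_boot all_order all_algebra.
From mathcomp Require Import all_classical all_reals all_analysis.
Set Implicit Arguments. Unset Strict Implicit. Unset Printing Implicit Defensive.
Import Order.TTheory GRing.Theory Num.Theory.
Import numFieldNormedType.Exports.
Local Open Scope classical_set_scope.
Local Open Scope ring_scope.

Section Defs.
Variable R : realType.

Definition cube (I : set R) (k : nat) : set 'rV[R]_k :=
  [set x | forall j : 'I_k, I (x ord0 j)].
Arguments cube : clear implicits.

(* min / max of the coordinates (only used for k > 0) *)
Definition vmin k (x : 'rV[R]_k) : R :=
  let s := [seq x ord0 j | j <- enum 'I_k] in \big[Num.min/head 0 s]_(y <- s) y.
Definition vmax k (x : 'rV[R]_k) : R :=
  let s := [seq x ord0 j | j <- enum 'I_k] in \big[Num.max/head 0 s]_(y <- s) y.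

Definition is_mean (I : set R) k (M : 'rV[R]_k -> R) :=
  forall x, cube I k x -> vmin x <= M x <= vmax x.

Definition nonconstant k (x : 'rV[R]_k) := exists j j' : 'I_k, x ord0 j != x ord0 j'.

Definition strict_mean (I : set R) k (M : 'rV[R]_k -> R) :=
  forall x, cube I k x -> nonconstant x -> vmin x < M x < vmax x.

Definition Malpha p (d : 'I_p -> nat) (alpha : forall i : 'I_p, 'I_(d i) -> 'I_p)
  (M : forall i : 'I_p, 'rV[R]_(d i) -> R) (x : 'rV[R]_p) : 'rV[R]_p :=
  \row_(i < p) M i (\row_(j < d i) x ord0 (alpha i j)).

Definition nondecr_each (I : set R) k (F : 'rV[R]_k -> R) :=
  forall x (j : 'I_k) (t : R), cube I k x -> I t -> x ord0 j <= t ->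
    F x <= F (\row_(l < k) if l == j then t else x ord0 l).

Definition pos_homogeneous k m (F : 'rV[R]_k -> 'rV[R]_m) :=
  forall (t : R) x, 0 < t -> cube [set y | 0 < y] k x -> F (t *: x) = t *: F x.
Definition pos_homogeneous1 k (F : 'rV[R]_k -> R) :=
  forall (t : R) x, 0 < t -> cube [set y | 0 < y] k x -> F (t *: x) = t * F x.

End Defs.
Arguments cube {R} I k.

Section Graph.
Variable p : nat.

Definition inc_edge (d : 'I_p -> nat) (alpha : forall i : 'I_p, 'I_(d i) -> 'I_p)
  : rel 'I_p := fun u v => [exists j : 'I_(d v), alpha v j == u].

Variable e : rel 'I_p.

Definition scc (v : 'I_p) : pred 'I_p := fun u => connect e v u && connect e u v.

(* root: union of SCCs receiving no edge from another component *)
Definition in_root (v : 'I_p) : bool :=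
  [forall u, forall w, (u \in scc v) && e w u ==> (w \in scc v)].

Definition root_edge : rel 'I_p := fun u v => [&& in_root u, in_root v & e u v].

Fixpoint walkn (f : rel 'I_p) (n : nat) (u v : 'I_p) : bool :=
  if n is n'.+1 then [exists w, f u w && walkn f n' w v] else u == v.

Definition ergodic (V : pred 'I_p) (f : rel 'I_p) :=
  [/\ exists v, V v,
      (forall u v, V u -> V v -> exists n, walkn f n u v) &
      (forall k : nat, (1 < k)%N ->
         ~ (forall n, (0 < n)%N -> (exists u, V u && walkn f n u u) -> (k %| n)%N))].

Definition root_ergodic := ergodic in_root root_edge.

End Graph.

(* Main.v *)
Require Import Defs.
From HB Require Import structures.
From mathcomp Require Import all_boot all_order all_algebra.
From mathcomp Require Import all_classical all_reals all_analysis.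
Import Order.TTheory GRing.Theory Num.Theory.
Import numFieldNormedType.Exports.
Local Open Scope classical_set_scope.
Local Open Scope ring_scope.

Section H.
Variable R : realType.

Lemma big_min_mem (s : seq R) idx : \big[Num.min/idx]_(y <- s) y \in idx :: s.
Proof.
elim: s => [|a s IH]; first by rewrite big_nil inE eqxx.
rewrite big_cons; set B := \big[_/_]_(_ <- _) _ in IH *.
case: (lerP a B) => h; rewrite !inE ?eqxx ?orbT //; move: IH; rewrite !inE => /orP[->|->]; by rewrite ?orbT.

Qed.

Lemma big_max_mem (s : seq R) idx : \big[Num.max/idx]_(y <- s) y \in idx :: s.
Proof.
elim: s => [|a s IH]; first by rewrite big_nil inE eqxx.
rewrite big_cons; set B := \big[_/_]_(_ <- _) _ in IH *.
case: (lerP a B) => h; rewrite !inE ?eqxx ?orbT //; move: IH; rewrite !inE => /orP[->|->]; by rewrite ?orbT.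

Qed.

Lemma vmin_coord k (x : 'rV[R]_k) : (0 < k)%N -> exists j, vmin x = x ord0 j.
Proof.
move=> k0; rewrite /vmin.
set s := [seq x ord0 j | j <- enum 'I_k].
have : vmin x \in s.
  have := big_min_mem s (head 0 s); rewrite /vmin -/s.
  case E: s => [|a s'] /=.
    by have := size_map (fun j => x ord0 j) (enum 'I_k); rewrite -/s E size_enum_ord /= => k00; rewrite -k00 in k0.
  by rewrite !inE; case/orP => [->|->]; rewrite ?eqxx ?orbT.
rewrite /vmin -/s => /mapP[j _ ->]; by exists j.
Qed.

Lemma vmax_coord k (x : 'rV[R]_k) : (0 < k)%N -> exists j, vmax x = x ord0 j.
Proof.
move=> k0; rewrite /vmax.
set s := [seq x ord0 j | j <- enum 'I_k].
have : vmax x \in s.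
  have := big_max_mem s (head 0 s); rewrite /vmax -/s.
  case E: s => [|a s'] /=.
    by have := size_map (fun j => x ord0 j) (enum 'I_k); rewrite -/s E size_enum_ord /= => k00; rewrite -k00 in k0.
  by rewrite !inE; case/orP => [->|->]; rewrite ?eqxx ?orbT.
rewrite /vmax -/s => /mapP[j _ ->]; by exists j.
Qed.

Lemma seq_uniq (u : nat -> R) (a b : R) : u @ \oo --> a -> u @ \oo --> b -> a = b.
Proof. move=> ha hb. exact: (cvg_unique _ ha hb). Qed.

Lemma mean_in (I : set R) k (F : 'rV[R]_k -> R) x :
  is_interval I -> (0 < k)%N -> is_mean I F -> cube I k x -> I (F x).
Proof.
move=> hI k0 hm hx.
have [j1 h1] := @vmin_coord k x k0; have [j2 h2] := @vmax_coord k x k0.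
have := hm x hx; rewrite h1 h2 => hb.
exact: (hI _ _ (hx j1) (hx j2) _ hb).
Qed.

Lemma Malpha_cube (I : set R) p (d : 'I_p -> nat) (alpha : forall i : 'I_p, 'I_(d i) -> 'I_p)
  (M : forall i : 'I_p, 'rV[R]_(d i) -> R) x :
  is_interval I -> (forall i, (0 < d i)%N) -> (forall i, is_mean I (M i)) ->
  cube I p x -> cube I p (Malpha alpha M x).
Proof.
move=> hI hd hm hx j; rewrite /Malpha mxE.
apply: (@mean_in I (d j) (M j) _ hI (hd j) (hm j)) => l; rewrite mxE; exact: hx.
Qed.

Lemma iter_cube (I : set R) p (d : 'I_p -> nat) (alpha : forall i : 'I_p, 'I_(d i) -> 'I_p)
  (M : forall i : 'I_p, 'rV[R]_(d i) -> R) x n :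
  is_interval I -> (forall i, (0 < d i)%N) -> (forall i, is_mean I (M i)) ->
  cube I p x -> cube I p (iter n (Malpha alpha M) x).
Proof.
move=> hI hd hm hx; elim: n => [|n IH] //=; exact: Malpha_cube.
Qed.

Lemma mono_all (I : set R) k (F : 'rV[R]_k -> R) : nondecr_each I F ->
  forall u v, cube I k u -> cube I k v -> (forall j, u ord0 j <= v ord0 j) -> F u <= F v.
Proof.
move=> hF u v hu hv huv.
pose w n := \row_(l < k) if (l < n)%N then v ord0 l else u ord0 l.
have wc n : cube I k (w n) by move=> l; rewrite mxE; case: ifP => _; [exact: hv|exact: hu].
have : forall n, F u <= F (w n).
  elim=> [|n IH].
    have -> : w 0%N = u by apply/rowP => l; rewrite mxE.
    by [].
  apply: (le_trans IH).
  case: (ltnP n k) => hn.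
    pose j := Ordinal hn.
    have -> : w n.+1 = \row_(l < k) if l == j then v ord0 j else w n ord0 l.
      apply/rowP => l; rewrite !mxE.
      case: eqP => [->|hne] /=; first by rewrite ltnSn.
      rewrite ltnS leq_eqVlt; have -> : (nat_of_ord l == n) = false.
        by apply/negbTE/eqP => e; apply: hne; apply: val_inj.
      by [].
    apply: hF; [exact: wc | exact: hv |].
    by rewrite mxE /= ltnn; exact: huv.
  have -> : w n.+1 = w n.
    apply/rowP => l; rewrite !mxE.
    have h1 : (l < n.+1)%N by apply: (leq_trans (ltn_ord l)); apply: (leq_trans hn).
    have h2 : (l < n)%N by apply: (leq_trans (ltn_ord l)).
    by rewrite h1 h2.
  by [].
move=> /(_ k); have -> : w k = v by apply/rowP => l; rewrite mxE ltn_ord.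
by [].
Qed.

End H.
Arguments Malpha_cube {R I p d alpha M x}.
Arguments iter_cube {R I p d alpha M x n}.
Arguments mono_all {R I k F}.
Arguments seq_uniq {R u a b}.

Theorem corollary3p2 (R : realType) (I : set R) (p : nat)
  (d : 'I_p -> nat) (alpha : forall i : 'I_p, 'I_(d i) -> 'I_p)
  (M : forall i : 'I_p, 'rV[R]_(d i) -> R) (K : 'rV[R]_p -> R) :
  is_interval I ->
  (0 < p)%N ->
  (forall i, (0 < d i)%N) ->
  (forall i, is_mean I (M i)) ->
  root_ergodic (inc_edge alpha) ->
  (forall i, {within cube I (d i), continuous (M i)}) ->
  (forall i, strict_mean I (M i)) ->
  (forall x, cube I p x -> forall i : 'I_p,
     (fun n => (iter n (Malpha alpha M) x) ord0 i) @ \oo --> K x) ->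
  [/\ (forall x, cube I p x -> K (Malpha alpha M x) = K x),
      ((forall i, nondecr_each I (M i)) -> nondecr_each I K) &
      (I = [set t | 0 < t] -> (forall i, pos_homogeneous1 (M i)) ->
        (forall n, pos_homogeneous (iter n (Malpha alpha M))) /\ pos_homogeneous1 K)].
Proof.
move=> hI p0 hd hm _ _ _ hK.
pose i0 : 'I_p := Ordinal p0.
split.
- move=> x hx.
  have h1 := hK _ (Malpha_cube (alpha:=alpha) hI hd hm hx) i0.
  have e : (fun n => iter n (Malpha alpha M) (Malpha alpha M x) ord0 i0) =
           (fun n => iter n.+1 (Malpha alpha M) x ord0 i0).
    by apply: funext => n; rewrite iterSr.
  rewrite e in h1.
  have h2 : (fun n => iter n.+1 (Malpha alpha M) x ord0 i0) @ \oo --> K x.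
    by have := cvg_shiftS (fun n => iter n (Malpha alpha M) x ord0 i0) (nbhs (K x)); move=> ->; exact: hK.
  exact: (seq_uniq h1 h2).
- move=> hmon x j t hx ht hxt.
  set y := \row_(l < p) _.
  have hy : cube I p y by move=> l; rewrite mxE; case: ifP.
  apply: (ler_cvg_to (hK _ hx i0) (hK _ hy i0)).
  apply: nearW => n.
  have : forall n, forall l, iter n (Malpha alpha M) x ord0 l <= iter n (Malpha alpha M) y ord0 l.
    elim=> [|m IH] l /=.
      rewrite /y mxE; case: eqP => [->|_] //.
    rewrite /Malpha !mxE; apply: (mono_all (hmon l)).
    + move=> l'; rewrite mxE; exact: (iter_cube (alpha:=alpha) hI hd hm hx).
    + move=> l'; rewrite mxE; exact: (iter_cube (alpha:=alpha) hI hd hm hy).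
    + by move=> l'; rewrite !mxE.
  by apply.
- move=> EI hh; subst I.
  have hM : forall (t : R) y, 0 < t -> cube [set y | 0 < y] p y ->
      Malpha alpha M (t *: y) = t *: Malpha alpha M y.
    move=> t y ht hy; apply/rowP => i; rewrite /Malpha !mxE.
    have -> : \row_(j < d i) (t *: y) ord0 (alpha i j) = t *: \row_(j < d i) y ord0 (alpha i j).
      by apply/rowP => j; rewrite !mxE.
    apply: hh => // j; rewrite mxE; exact: hy.
  have hit : forall n, pos_homogeneous (iter n (Malpha alpha M)).
    elim=> [|n IH] t x ht hx //=.
    rewrite IH // hM //; exact: (iter_cube (alpha:=alpha) _ hd hm hx).
  split => // t x ht hx.
  have htx : cube [set y | 0 < y] p (t *: x) by move=> l; rewrite mxE /=; apply: mulr_gt0 => //; exact: hx.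
  have h1 := hK _ htx i0.
  have h2 : (fun n => t * iter n (Malpha alpha M) x ord0 i0) @ \oo --> t * K x.
    exact: (cvgMl_tmp (a:=t) (hK _ hx i0)).
  have e : (fun n => iter n (Malpha alpha M) (t *: x) ord0 i0) =
           (fun n => t * iter n (Malpha alpha M) x ord0 i0).
    by apply: funext => n; rewrite hit // mxE.
  rewrite e in h1.
  exact: (seq_uniq h1 h2).
Qed.
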